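(* For $q\ge1$, let a $q$-prime factor be a word $0^a1^b$ with $b\ge0$ and $a=\lfloor b/q\rfloor+1$. The bivariate generating function $S_q(x,y)=\sum_{n,k\ge0}s_{n,k}x^ny^k$, where $s_{n,k}$ is the number of $q$-prime factors of length $n$ having exactly $k$ letters $1$, is $$S_q(x,y)=\frac{x\left(1-(xy)^q\right)}{(xy-1)(x^{q+1}y^q-1)}.$$
   Context: Exponents denote repetition of letters: $0^a1^b$ is $a$ zeros followed by $b$ ones. *)

(* Defs.v *)
From mathcomp Require Import all_boot all_algebra.
Set Implicit Arguments. Unset Strict Implicit. Unset Printing Implicit Defensive.
Import GRing.Theory.
Local Open Scope ring_scope.

(* Words over {0,1}: a letter is a bool, [false] = 0, [true] = 1. *)

(* w is a q-prime factor: w = 0^a 1^b with b >= 0 and a = floor(b/q)+1.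
   (b is necessarily <= size w, so the bounded existential is harmless.) *)
Definition qprime_factor (q : nat) (w : seq bool) : bool :=
  [exists b : 'I_(size w).+1,
     w == nseq ((b %/ q).+1)%N false ++ nseq b true].

Definition s_coef (q n k : nat) : int :=
  (#|[set w : n.-tuple bool | qprime_factor q w && (count id w == k)]|)%:Z.

(* Formal power series in two variables x, y with integer coefficients:
   f n k is the coefficient of x^n y^k. *)
Definition fps2 := nat -> nat -> int.

Definition fps_add (f g : fps2) : fps2 := fun n k => f n k + g n k.
Definition fps_opp (f : fps2) : fps2 := fun n k => - f n k.
Definition fps_sub (f g : fps2) : fps2 := fps_add f (fps_opp g).
Definition fps_mul (f g : fps2) : fps2 := fun n k =>
  \sum_(i < n.+1) \sum_(j < k.+1) f i j * g (n - i)%N (k - j)%N.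
Definition fps_one : fps2 := fun n k => ((n == 0%N) && (k == 0%N))%:R.
Definition fps_mon (a b : nat) : fps2 := fun n k => ((n == a) && (k == b))%:R.
Definition fps_x : fps2 := fps_mon 1 0.
Definition fps_y : fps2 := fps_mon 0 1.
Definition fps_exp (f : fps2) (m : nat) : fps2 := iter m (fps_mul f) fps_one.

Definition S_gf (q : nat) : fps2 := fun n k => s_coef q n k.

(* Main.v *)
Require Import Defs.
From mathcomp Require Import all_boot all_algebra.
From mathcomp Require Import zify ring.
From Stdlib Require Import FunctionalExtensionality.
Import GRing.Theory.
Local Open Scope nat_scope.
Lemma divfacts (k q : nat) (hq : 1 <= q) :
  [/\ q <= k -> (k-q)%/q = k%/q - 1 /\ 1 <= k%/q,
      q + 1 <= k -> (k-(1+q))%/q = (k-1)%/q - 1 /\ 1 <= (k-1)%/q,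
      k < q -> k %/ q = 0 &
      1 <= k <= q -> (k-1) %/ q = 0].
Proof.
have g : forall m, q <= m -> (m-q)%/q = m%/q - 1 /\ 1 <= m%/q.
  move=> m hk; have [m' ->] : exists m', m = m' + 1 * q by exists (m - q); lia.
  rewrite divnDMl; last lia. have -> : m' + 1 * q - q = m' by lia.
  by rewrite addnK addn1.
split => //.
- exact: g.
- move=> hk; rewrite (_ : k - (1+q) = k - 1 - q); [apply: g; lia | lia].
- by move=> hk; rewrite divn_small.
- by move=> hk; rewrite divn_small //; lia.
Qed.
Local Open Scope ring_scope.
Lemma core (q n k : nat) (hq : (1 <= q)%N) :
  let F k := (k + k %/ q + 1)%N in
  ((((1 + q.+1 <= n) && (1 + q <= k) && (n - (1 + q.+1) == F (k - (1 + q))))%N)%:R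
  - (((0<n)&&(0<k)&&(n-1 == F(k-1)))%N)%:R
  - (((q < n) && (q <= k) && (n- q.+1 == F (k-q)))%N%:R - (n == F k)%N%:R) : int)
  = ((n==1) && (k==0))%N%:R - ((n == 1 + q) && (k == q))%N%:R.
Proof.
move=> F; rewrite /F.
have [h1 h2 h3 h4] := @divfacts k q hq; move: h1 h2 h3 h4.
generalize (k%/q)%N ((k-1)%/q)%N ((k-q)%/q)%N ((k-(1+q))%/q)%N => d1 d2 d3 d4 h1 h2 h3 h4.
clear F.
have [hk|hk|hk] := ltngtP k q.
- have {h3} d10 := h3 hk; subst d1; clear h1 h2.
  rewrite (_ : (1 + q.+1 <= n)%N && _ && _ = false); last by apply/negbTE; lia.
  rewrite !andbF.
  have [k0|k0] := eqVneq k 0%N.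
    subst k. rewrite (_ : (0 < n)%N && _ && _ = false); last by apply/negbTE; lia.
    rewrite (_ : (n == 0 + 0 + 1)%N = (n == 1%N)); last by apply/idP/idP; lia.
    rewrite andbT. ring.
  have {h4} d20 : d2 = 0%N by apply: h4; lia.
  subst d2.
  rewrite (_ : (0 < n)%N && _ && _ = (n == k + 0 + 1)%N); last by apply/idP/idP; lia.
  rewrite (_ : (n == 1%N) && _ = false); last by apply/negbTE; lia.
  ring.
- have [{h1}h1 h1'] := h1 (ltnW hk).
  have [{h2}h2 h2'] := h2 ltac:(by rewrite addn1). clear h3 h4.
  rewrite (_ : (1 + q.+1 <= n)%N && _ && _ = (0 < n)%N && (0 < k)%N && (n - 1 == k - 1 + d2 + 1)%N); last by apply/idP/idP; lia.
  rewrite (_ : (q < n)%N && _ && _ = (n == k + d1 + 1)%N); last by apply/idP/idP; lia.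
  rewrite (_ : (n == 1%N) && _ = false); last by apply/negbTE; lia.
  rewrite andbF. ring.
- subst k. have [{h1}h1 h1'] := h1 (leqnn q).
  have {h4} h4 : d2 = 0%N by apply: h4; lia.
  subst d2; clear h2 h3.
  rewrite (_ : (1 + q.+1 <= n)%N && _ && _ = false); last by apply/negbTE; lia.
  rewrite (_ : (q < n)%N && _ && _ = (n == q + d1 + 1)%N); last by apply/idP/idP; lia.
  rewrite (_ : (0 < n)%N && _ && _ = (n == 1 + q)%N); last by apply/idP/idP; lia.
  rewrite (_ : (n == 1%N) && _ = false); last by apply/negbTE; lia.
  rewrite andbT. ring.
Qed.

Local Close Scope ring_scope.
Local Open Scope nat_scope.
Definition word (q k : nat) : seq bool := nseq (k %/ q).+1 false ++ nseq k true.

Lemma qpf_iff q k (w : seq bool) :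
  qprime_factor q w && (count id w == k) = (w == word q k).
Proof.
apply/idP/idP.
- case/andP => /existsP [b /eqP hw] /eqP hc.
  move: hc; rewrite hw count_cat !count_nseq /= mul0n add0n mul1n => hb.
  by rewrite /word -hb.
- move/eqP => ->; apply/andP; split; last first.
    by rewrite /word count_cat !count_nseq /= mul0n add0n mul1n.
  apply/existsP.
  have hk : k < (size (word q k)).+1 by rewrite /word size_cat !size_nseq; move: (k %/ q) => d; lia.
  by exists (Ordinal hk).
Qed.

Local Open Scope ring_scope.
Lemma s_coefE q n k : s_coef q n k = (n == (k + k %/ q + 1)%N)%:R.
Proof.
rewrite /s_coef -natz.
have E : [set w : n.-tuple bool | qprime_factor q w && (count id w == k)]
       = [set w : n.-tuple bool | val w == word q k].
  by apply/setP => w; rewrite !inE qpf_iff.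
rewrite E; have [h|h] := eqVneq n (k + k %/ q + 1)%N.
- have sz : size (word q k) == n.
    rewrite /word size_cat !size_nseq h; move: (k %/ q)%N => d; lia.
  have -> : [set w : n.-tuple bool | val w == word q k] = [set Tuple sz].
    by apply/setP => w; rewrite !inE -val_eqE.
  by rewrite cards1.
- have -> : [set w : n.-tuple bool | val w == word q k] = set0.
    apply/setP => w; rewrite !inE; apply/negbTE/eqP => hw.
    move: (size_tuple w); rewrite hw /word size_cat !size_nseq => hs.
    move: h; rewrite -hs; move: (k %/ q)%N => d; lia.
  by rewrite cards0.
Qed.

Local Open Scope ring_scope.
Lemma fps_ext (f g : fps2) : (forall n k, f n k = g n k) -> f = g.
Proof. move=> h; apply: functional_extensionality => n; apply: functional_extensionality => k; exact: h. Qed.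

Lemma sum1 (m a : nat) (G : nat -> int) :
  \sum_(i < m.+1) (m - i == a)%N%:R * G i = if (a <= m)%N then G (m - a)%N else 0.
Proof.
case: (leqP a m) => h.
- have hi : (m - a < m.+1)%N by lia.
  rewrite (bigD1 (Ordinal hi)) //= subKn // eqxx mul1r big1 ?addr0 //.
  move=> i /eqP hne; rewrite (_ : (m - i == a)%N = false) ?mul0r //.
  apply/negbTE/eqP => e; apply: hne; apply: val_inj => /=; have := ltn_ord i; lia.
- rewrite big1 // => i _; rewrite (_ : (m - i == a)%N = false) ?mul0r //.
  apply/negbTE; lia.
Qed.

Lemma mulfm f a b n k :
  fps_mul f (fps_mon a b) n k =
  if (a <= n)%N && (b <= k)%N then f (n - a)%N (k - b)%N else 0.
Proof.
rewrite /fps_mul.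
transitivity (\sum_(i < n.+1) (n - i == a)%N%:R *
               \sum_(j < k.+1) (k - j == b)%N%:R * f i j).
  apply: eq_bigr => i _; rewrite mulr_sumr; apply: eq_bigr => j _.
  rewrite /fps_mon -mulnb natrM; ring.
rewrite (sum1 n a (fun i => \sum_(j < k.+1) (k - j == b)%N%:R * f i j)).
case: (a <= n)%N => //=.
by rewrite (sum1 k b (fun j => f (n - a)%N j)).
Qed.

Lemma mul_mon a b c d : fps_mul (fps_mon a b) (fps_mon c d) = fps_mon (a + c) (b + d).
Proof.
apply: fps_ext => n k; rewrite mulfm /fps_mon.
case: ifP => h.
- rewrite (_ : (n - c == a)%N && _ = (n == a + c)%N && (k == b + d)%N) //; apply/idP/idP; lia.
- rewrite (_ : (n == a + c)%N && _ = false) //; apply/negbTE; lia.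
Qed.

Lemma one_mon : fps_one = fps_mon 0 0. Proof. by []. Qed.

Lemma exp_mon a b m : fps_exp (fps_mon a b) m = fps_mon (a * m) (b * m).
Proof.
elim: m => [|m IH]; first by rewrite !muln0.
by rewrite /fps_exp iterS -/(fps_exp _ m) IH mul_mon !mulnS.
Qed.

Lemma mul_subr f g h : fps_mul f (fps_sub g h) = fps_sub (fps_mul f g) (fps_mul f h).
Proof.
apply: fps_ext => n k; rewrite /fps_mul /fps_sub /fps_add /fps_opp -sumrB.
apply: eq_bigr => i _; rewrite -sumrB; apply: eq_bigr => j _; by rewrite mulrBr.
Qed.

Lemma mul_subl f g h : fps_mul (fps_sub g h) f = fps_sub (fps_mul g f) (fps_mul h f).
Proof.
apply: fps_ext => n k; rewrite /fps_mul /fps_sub /fps_add /fps_opp -sumrB.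
apply: eq_bigr => i _; rewrite -sumrB; apply: eq_bigr => j _; by rewrite mulrBl.
Qed.

Lemma ifS q c x y : (if c then S_gf q x y else 0) = (c && (x == y + y %/ q + 1)%N)%:R.
Proof. by case: c => //=; rewrite /S_gf s_coefE. Qed.

Theorem lemma2 (q : nat) (hq : (1 <= q)%N) :
  fps_mul (S_gf q)
          (fps_mul (fps_sub (fps_mul fps_x fps_y) fps_one)
                   (fps_sub (fps_mul (fps_exp fps_x q.+1) (fps_exp fps_y q)) fps_one))
  = fps_mul fps_x (fps_sub fps_one (fps_exp (fps_mul fps_x fps_y) q)).
Proof.
rewrite /fps_x /fps_y one_mon !mul_mon !exp_mon !mul_mon !mul_subl !mul_subr !mul_mon.
apply: fps_ext => n k; rewrite /fps_sub /fps_add /fps_opp !mulfm /fps_mon.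
rewrite !(mul1n, mul0n, add0n, addn0, subn0, leq0n) /=.
rewrite !ifS /S_gf s_coefE.
have := @core q n k hq => /= ->; ring.
Qed.
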